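(* Let $K$ be an algebraically closed field of characteristic zero, $\deg_1$ a positive weighted homogeneous degree on $K[x_1,\dots,x_n]$, and $R\in K[x_1,\dots,x_n]\setminus K$ an irreducible $\deg_1$-homogeneous polynomial. If there exists a nonzero locally nilpotent derivation $D$ of $K[x_1,\dots,x_n]$ with $D(R)=0$, then the quotient ring $K[x_1,\dots,x_n]/(R)$ admits a nonzero weighted homogeneous locally nilpotent derivation.
   Context: A p.w.h. degree assigns positive real weights to the variables; the quotient is graded accordingly, and a derivation is weighted homogeneous (of degree $r$) if it maps homogeneous elements of degree $m$ to homogeneous elements of degree $m+r$. *)

(* Defs.v *)
From HB Require Import structures.
From Stdlib Require Import ClassicalEpsilon.
From Stdlib Require Rdefinitions Raxioms.
From mathcomp Require Import all_boot all_algebra.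
From mathcomp Require Import ring_quotient generic_quotient.
From mathcomp.multinomials Require Import mpoly.

Set Implicit Arguments.
Unset Strict Implicit.
Unset Printing Implicit Defensive.

Import GRing.Theory.
Local Open Scope ring_scope.

Definition asb (P : Prop) : bool :=
  if excluded_middle_informative P then true else false.

Lemma asbP (P : Prop) : reflect P (asb P).
Proof. by rewrite /asb; case: excluded_middle_informative => h; constructor. Qed.

Definition pideal_pred (A : comNzRingType) (r : A) : A -> bool :=
  fun p => if asb (exists q, 1 = r * q) then p == 0 else asb (exists q, p = r * q).

Lemma asbT (P : Prop) : P -> asb P = true.
Proof. by move=> h; apply/asbP. Qed.

Lemma asbF (P : Prop) : ~ P -> asb P = false.
Proof. by move=> h; apply/asbP. Qed.

Lemma pideal_closed (A : comNzRingType) (r : A) : idealr_closed (pideal_pred r).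
Proof.
have E : forall p, (p \in pideal_pred r) = pideal_pred r p by [].
case hu: (asb (exists q, 1 = r * q)).
  split.
  - by rewrite E /pideal_pred hu.
  - by rewrite E /pideal_pred hu oner_eq0.
  - by move=> a u v; rewrite !E /pideal_pred hu => /eqP -> /eqP ->; rewrite mulr0 addr0.
split.
- by rewrite E /pideal_pred hu; apply/asbP; exists 0; rewrite mulr0.
- by rewrite E /pideal_pred hu.
- move=> a u v; rewrite !E /pideal_pred hu => /asbP [qu ->] /asbP [qv ->].
  by apply/asbP; exists (a * qu + qv); rewrite mulrDr mulrCA.
Qed.

HB.instance Definition _ (A : comNzRingType) (r : A) :=
  isIdealr.Build A (pideal_pred r) (pideal_closed r).

Definition pideal (A : comNzRingType) (r : A) : idealr A := pideal_pred r.

(* The quotient ring A/(r) by the principal ideal rA.  (In the degenerate case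
   where r is a unit, the zero ideal is used instead so that the library's
   properness requirement holds; this case is excluded in the theorem since
   the polynomial there is irreducible.) *)
Definition quot_by (A : comNzRingType) (r : A) := {ideal_quot (pideal r)}.

Definition qproj (A : comNzRingType) (r : A) : A -> quot_by r :=
  \pi_(quot_by r)%qT.

Notation real := Rdefinitions.R.

Definition wdeg (n : nat) (w : 'I_n -> real) (m : 'X_{1..n}) : real :=
  \big[Rdefinitions.Rplus/Rdefinitions.IZR BinNums.Z0]_(i < n)
     Rdefinitions.Rmult (w i) (Raxioms.INR (m i)).

Definition positive_weights (n : nat) (w : 'I_n -> real) : Prop :=
  forall i, Rdefinitions.Rlt (Rdefinitions.IZR BinNums.Z0) (w i).

(* p is weighted homogeneous of degree d: every monomial of p has weighted
   degree d (the zero polynomial is homogeneous of every degree). *)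
Definition whomog (K : fieldType) (n : nat) (w : 'I_n -> real) (d : real)
  (p : {mpoly K[n]}) : Prop :=
  forall m, m \in msupp p -> wdeg w m = d.

Definition qhomog (K : fieldType) (n : nat) (w : 'I_n -> real)
  (r : {mpoly K[n]}) (d : real) (a : quot_by r) : Prop :=
  exists p, whomog w d p /\ qproj r p = a.

Definition is_derivation (K : fieldType) (A : comNzRingType) (emb : K -> A)
  (D : A -> A) : Prop :=
  [/\ forall a b, D (a + b) = D a + D b,
      forall a b, D (a * b) = a * D b + D a * b
    & forall c, D (emb c) = 0].

Definition locally_nilpotent (A : comNzRingType) (D : A -> A) : Prop :=
  forall a, exists k : nat, iter k D a = 0.

Definition whomog_qder (K : fieldType) (n : nat) (w : 'I_n -> real)
  (r : {mpoly K[n]}) (D : quot_by r -> quot_by r) : Prop :=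
  exists e : real, forall (d : real) (a : quot_by r),
    qhomog w d a -> qhomog w (Rdefinitions.Rplus d e) (D a).

Definition is_unit (A : comNzRingType) (a : A) : Prop := exists b, a * b = 1.

Definition irreducible_elt (A : comNzRingType) (r : A) : Prop :=
  [/\ r != 0, ~ is_unit r
    & forall a b, r = a * b -> is_unit a \/ is_unit b].

(* Main.v *)
Require Import Defs.
From HB Require Import structures.
From Stdlib Require Import Reals Lra ClassicalEpsilon FunctionalExtensionality Classical.
From mathcomp Require Import all_boot all_algebra.
From mathcomp Require Import ring_quotient generic_quotient.
From mathcomp.multinomials Require Import mpoly.
From mathcomp Require Import zify.
Import GRing.Theory.
Local Open Scope ring_scope.
Set Implicit Arguments.
Unset Strict Implicit.

Lemma Rplus_assoc' : associative Rplus.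
Proof. by move=> x y z; rewrite Rplus_assoc. Qed.
Lemma Rplus_comm' : commutative Rplus.
Proof. exact: Rplus_comm. Qed.
Lemma Rplus_0_l' : left_id (IZR BinNums.Z0) Rplus.
Proof. exact: Rplus_0_l. Qed.
HB.instance Definition _ := Monoid.isComLaw.Build real (IZR BinNums.Z0) Rplus
  Rplus_assoc' Rplus_comm' Rplus_0_l'.

Section W.
Variables (n : nat) (w : 'I_n -> real).

Lemma wdegD m1 m2 : wdeg w (m1 + m2)%MM = Rplus (wdeg w m1) (wdeg w m2).
Proof.
rewrite /wdeg -big_split /=; apply: eq_bigr => i _.
by rewrite mnmDE plus_INR Rmult_plus_distr_l.
Qed.

Lemma wdeg0 : wdeg w 0%MM = IZR BinNums.Z0.
Proof. by rewrite /wdeg big1 // => i _; rewrite mnm0E /= Rmult_0_r. Qed.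

Lemma wdegU i : wdeg w U_(i)%MM = w i.
Proof.
rewrite /wdeg (bigD1 i) //= big1 ?mnm1E ?eqxx /=; first by rewrite Rmult_1_r Rplus_0_r.
by move=> j; rewrite mnm1E eq_sym => /negbTE ->; rewrite Rmult_0_r.
Qed.
End W.

Section Deg.
Variables (K : fieldType) (n : nat) (w : 'I_n -> real).
Local Notation P := {mpoly K[n]}.
Local Notation wd := (wdeg w).

Definition dle c (p : P) := forall m, p@_m != 0 -> Rle (wd m) c.
Definition dlt c (p : P) := forall m, p@_m != 0 -> Rlt (wd m) c.
Definition hom c (p : P) := forall m, p@_m != 0 -> wd m = c.

Lemma homE c p : whomog w c p <-> hom c p.
Proof.
split=> h m; first by move=> hm; apply: h; rewrite mcoeff_msupp.
by rewrite mcoeff_msupp; apply: h.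
Qed.

Lemma coefD_ne0 (p q : P) m : (p + q)@_m != 0 -> p@_m != 0 \/ q@_m != 0.
Proof.
rewrite mcoeffD; case: (eqVneq p@_m 0) => [->|]; first by rewrite add0r; right.
by left.
Qed.

Lemma hom0 c : hom c 0. Proof. by move=> m; rewrite mcoeff0 eqxx. Qed.
Lemma dlt0 c : dlt c 0. Proof. by move=> m; rewrite mcoeff0 eqxx. Qed.
Lemma dle0 c : dle c 0. Proof. by move=> m; rewrite mcoeff0 eqxx. Qed.
Lemma homD c p q : hom c p -> hom c q -> hom c (p + q).
Proof. by move=> hp hq m /coefD_ne0 [/hp|/hq]. Qed.
Lemma dltD c p q : dlt c p -> dlt c q -> dlt c (p + q).
Proof. by move=> hp hq m /coefD_ne0 [/hp|/hq]. Qed.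
Lemma dleD c p q : dle c p -> dle c q -> dle c (p + q).
Proof. by move=> hp hq m /coefD_ne0 [/hp|/hq]. Qed.
Lemma homN c p : hom c p -> hom c (- p).
Proof. by move=> hp m; rewrite mcoeffN oppr_eq0; apply: hp. Qed.
Lemma dltN c p : dlt c p -> dlt c (- p).
Proof. by move=> hp m; rewrite mcoeffN oppr_eq0; apply: hp. Qed.
Lemma homZ c a p : hom c p -> hom c (a *: p).
Proof. by move=> hp m; rewrite mcoeffZ mulf_eq0 negb_or => /andP[_ /hp]. Qed.
Lemma homX m : hom (wd m) 'X_[m].
Proof. by move=> u; rewrite mcoeffX; case: (m =P u) => [->|]; rewrite ?eqxx. Qed.
Lemma hom_sum I (r : seq I) (F : I -> P) c :
  (forall i, hom c (F i)) -> hom c (\sum_(i <- r) F i).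
Proof. by move=> h; elim/big_ind: _ => //; [apply: hom0| apply: homD]. Qed.
Lemma dlt_sum I (r : seq I) (F : I -> P) c :
  (forall i, dlt c (F i)) -> dlt c (\sum_(i <- r) F i).
Proof. by move=> h; elim/big_ind: _ => //; [apply: dlt0| apply: dltD]. Qed.
Lemma hom_dlt0 c p : hom c p -> dlt c p -> p = 0.
Proof.
move=> h1 h2; apply/mpolyP => m; rewrite mcoeff0.
case: (eqVneq p@_m 0) => // hm.
have := h2 _ hm; rewrite (h1 _ hm) => /Rlt_irrefl [].
Qed.
Lemma hom_eq c d p : c = d -> hom c p -> hom d p.
Proof. by move=> ->. Qed.

Lemma coefM_ne0 (p q : P) m : (p * q)@_m != 0 ->
  exists m1 m2, [/\ p@_m1 != 0, q@_m2 != 0 & m = (m1 + m2)%MM].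
Proof.
rewrite -mcoeff_msupp => /msuppM_le /allpairsP [[m1 m2] /= [h1 h2 ->]].
by exists m1, m2; rewrite -!mcoeff_msupp.
Qed.

Lemma homM a b p q : hom a p -> hom b q -> hom (Rplus a b) (p * q).
Proof.
by move=> hp hq m /coefM_ne0 [m1 [m2 [/hp h1 /hq h2 ->]]]; rewrite wdegD h1 h2.
Qed.
Lemma dltM a b p q : dle a p -> dlt b q -> dlt (Rplus a b) (p * q).
Proof.
move=> hp hq m /coefM_ne0 [m1 [m2 [/hp h1 /hq h2 ->]]]; rewrite wdegD; lra.
Qed.
Lemma dltM' a b p q : dlt a p -> dle b q -> dlt (Rplus a b) (p * q).
Proof.
move=> hp hq m /coefM_ne0 [m1 [m2 [/hp h1 /hq h2 ->]]]; rewrite wdegD; lra.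
Qed.
Lemma hom_dle c p : hom c p -> dle c p.
Proof. by move=> h m /h ->; apply: Rle_refl. Qed.
Lemma dlt_dle c p : dlt c p -> dle c p.
Proof. by move=> h m /h; apply: Rlt_le. Qed.

Lemma wdeg_subU (m : 'X_{1..n}) i : (0 < m i)%N -> wd (m - U_(i))%MM = Rminus (wd m) (w i).
Proof.
move=> hm; have -> : wd m = wd ((m - U_(i)) + U_(i))%MM.
  congr wd; rewrite submK //; apply/mnm_lepP => j; rewrite mnm1E.
  by case: eqP => [<-|] //.
rewrite wdegD wdegU; lra.
Qed.

Lemma coef_deriv_ne0 (p : P) i m : (p^`M(i))@_m != 0 ->
  p@_(m + U_(i)) != 0 /\ wd m = Rminus (wd (m + U_(i))%MM) (w i).
Proof.
rewrite mcoeff_mderiv => h; split.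
  by apply: contraNneq h => ->; rewrite mul0rn.
rewrite wdegD wdegU; lra.
Qed.

Lemma hom_deriv c p i : hom c p -> hom (Rminus c (w i)) (p^`M(i)).
Proof. by move=> h m /coef_deriv_ne0 [/h h1 ->]; rewrite h1. Qed.
Lemma dle_deriv c p i : dle c p -> dle (Rminus c (w i)) (p^`M(i)).
Proof. move=> h m /coef_deriv_ne0 [/h h1 ->]; lra. Qed.
Lemma dlt_deriv c p i : dlt c p -> dlt (Rminus c (w i)) (p^`M(i)).
Proof. move=> h m /coef_deriv_ne0 [/h h1 ->]; lra. Qed.

Definition comp c (p : P) : P :=
  \sum_(m <- msupp p) (if asb (wd m = c) then p@_m else 0) *: 'X_[m].

Lemma mcoeff_comp c p u : (comp c p)@_u = if asb (wd u = c) then p@_u else 0.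
Proof.
rewrite /comp raddf_sum /=.
under eq_bigr => m _ do rewrite mcoeffZ mcoeffX.
case: (boolP (u \in msupp p)) => hu.
  rewrite (bigD1_seq u) ?msupp_uniq //= eqxx mulr1 big1 ?addr0 //.
  by move=> m /negbTE ->; rewrite mulr0.
rewrite big_seq big1; last first.
  move=> m hm; case: (m =P u) => [e|_]; last by rewrite mulr0.
  by move: hu; rewrite -e hm.
by move: hu; rewrite -mcoeff_eq0 => /eqP ->; case: asb.
Qed.
End Deg.
Section Deg2.
Variables (K : fieldType) (n : nat) (w : 'I_n -> real).
Local Notation P := {mpoly K[n]}.
Local Notation wd := (wdeg w).
Local Notation hom := (@hom K n w).
Local Notation dle := (@dle K n w).
Local Notation dlt := (@dlt K n w).
Local Notation comp := (@comp K n w).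

Lemma asb_iff (A B : Prop) : (A <-> B) -> asb A = asb B.
Proof. by move=> h; case: (asbP A) => a; case: (asbP B) => b //; exfalso; tauto. Qed.

Lemma comp_hom c p : hom c (comp c p).
Proof.
move=> m; rewrite mcoeff_comp; case: asbP => [h _|_]; [exact: h| by rewrite eqxx].
Qed.

Lemma comp_id c p : hom c p -> comp c p = p.
Proof.
move=> h; apply/mpolyP => m; rewrite mcoeff_comp; case: asbP => // hm.
by case: (eqVneq p@_m 0) => // /h.
Qed.

Lemma dle_split c p : dle c p -> dlt c (p - comp c p).
Proof.
move=> h m; rewrite mcoeffB mcoeff_comp; case: asbP => hm.
  by rewrite subrr eqxx.
rewrite subr0 => /h hle; case: (Rle_lt_or_eq_dec _ _ hle) => // /hm [].
Qed.

Lemma comp_shift a e r q : hom a r -> comp (Rplus e a) (r * q) = r * comp e q.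
Proof.
move=> hr; apply/mpolyP => u; rewrite mcoeff_comp !mcoeffM.
under [RHS]eq_bigr => k _ do rewrite mcoeff_comp.
rewrite [LHS](_ : _ = \sum_(k : 'X_{1..n < (mdeg u).+1, (mdeg u).+1} | u == (k.1 + k.2)%MM)
   (if asb (wd u = Rplus e a) then r@_k.1 * q@_k.2 else 0)); last first.
  by case: asb => //; rewrite big1.
apply: eq_bigr => -[k1 k2] /= /eqP hu.
case: (eqVneq r@_k1 0) => [->|/hr hk]; first by rewrite !mul0r; case: asb.
rewrite (@asb_iff _ (wd k2 = e)); first by case: asb; rewrite ?mulr0.
move: (@wdegD n w k1 k2); rewrite -hu => ->.
rewrite hk; split => h; lra.
Qed.

Lemma hom_cancel a b (r q : P) : hom a r -> r != 0 -> hom b (r * q) ->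
  hom (Rminus b a) q.
Proof.
move=> hr nr hrq.
have e : b = Rplus (Rminus b a) a by lra.
have := comp_shift (Rminus b a) q hr; rewrite -e comp_id // => /mulfI.
by move=> /(_ nr) ->; apply: comp_hom.
Qed.
End Deg2.
Section Der.
Variables (K : fieldType) (n : nat).
Local Notation P := {mpoly K[n]}.

Definition Dform (g : 'I_n -> P) (f : P) : P := \sum_i f^`M(i) * g i.

Lemma DformD g f1 f2 : Dform g (f1 + f2) = Dform g f1 + Dform g f2.
Proof. by rewrite /Dform -big_split; apply: eq_bigr => i _; rewrite mderivD mulrDl. Qed.
Lemma DformN g f : Dform g (- f) = - Dform g f.
Proof. by rewrite /Dform -sumrN; apply: eq_bigr => i _; rewrite mderivN mulNr. Qed.
Lemma DformB g f1 f2 : Dform g (f1 - f2) = Dform g f1 - Dform g f2.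
Proof. by rewrite DformD DformN. Qed.
Lemma Dform0 g : Dform g 0 = 0.
Proof. by rewrite /Dform big1 // => i _; rewrite mderiv0 mul0r. Qed.
Lemma DformZ g c f : Dform g (c *: f) = c *: Dform g f.
Proof. by rewrite /Dform scaler_sumr; apply: eq_bigr => i _; rewrite mderivZ scalerAl. Qed.
Lemma DformM g f1 f2 : Dform g (f1 * f2) = f1 * Dform g f2 + Dform g f1 * f2.
Proof.
rewrite /Dform mulr_sumr mulr_suml -big_split; apply: eq_bigr => i _.
by rewrite mderivM mulrDl addrC mulrA; congr (_ + _); rewrite -!mulrA [_ * f2]mulrC.
Qed.
Lemma DformC g c : Dform g c%:MP = 0.
Proof. by rewrite /Dform big1 // => i _; rewrite mderivC mul0r. Qed.
Lemma DformX g i : Dform g 'X_i = g i.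
Proof.
rewrite /Dform (bigD1 i) //= big1 ?addr0.
  rewrite mderivX mnm1E eqxx.
  have -> : (U_(i) - U_(i))%MM = 0%MM :> 'X_{1..n} by apply/mnmP => j; rewrite !mnmE subnn.
  by rewrite mpolyX0 scale1r mul1r.
move=> j; rewrite eq_sym => /negbTE hj; rewrite mderivX mnm1E hj scale0r mul0r //.
Qed.
Lemma Dform_sub g1 g2 f : Dform g1 f - Dform g2 f = Dform (fun i => g1 i - g2 i) f.
Proof. by rewrite /Dform -sumrB; apply: eq_bigr => i _; rewrite mulrBr. Qed.
Lemma Dform_scal r h f : Dform (fun i => r * h i) f = r * Dform h f.
Proof. by rewrite /Dform mulr_sumr; apply: eq_bigr => i _; rewrite mulrCA. Qed.

Lemma Dform_iterD g k a b :
  iter k (Dform g) (a + b) = iter k (Dform g) a + iter k (Dform g) b.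
Proof. by elim: k => //= k ->; rewrite DformD. Qed.
Lemma Dform_iter0 g k : iter k (Dform g) 0 = 0.
Proof. by elim: k => //= k ->; rewrite Dform0. Qed.
Lemma Dform_iterZ g k c a : iter k (Dform g) (c *: a) = c *: iter k (Dform g) a.
Proof. by elim: k => //= k ->; rewrite DformZ. Qed.

Lemma der_rep (D : P -> P) : is_derivation (fun c : K => c%:MP) D ->
  forall f, D f = Dform (fun i => D 'X_i) f.
Proof.
case=> hD hM hC.
have D0 : D 0 = 0.
  by have := hD 0 0; rewrite addr0 => /(congr1 (fun x => x - D 0)) /=; rewrite addrK subrr => <-.
have hX : forall m, D 'X_[m] = Dform (fun i => D 'X_i) 'X_[m].
  move=> m; move: {2}(mdeg m) (leqnn (mdeg m)) => k; elim: k m => [|k IH] m hm.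
    have /eqP -> : m == 0%MM by rewrite -mdeg_eq0 -leqn0.
    by rewrite mpolyX0 -(mpolyC1) hC DformC.
  case: (pickP (fun i => (0 < m i)%N)) => [i hi|h]; last first.
    have -> : m = 0%MM by apply/mnmP => i; rewrite mnm0E; move: (h i) => /= /negbT; rewrite lt0n negbK => /eqP.
    by rewrite mpolyX0 -(mpolyC1) hC DformC.
  have em : m = ((m - U_(i)) + U_(i))%MM.
    rewrite submK //; apply/mnm_lepP => j; rewrite mnm1E.
    by case: (i =P j) => [<-|].
  have hk : (mdeg (m - U_(i))%MM <= k)%N.
    by move: hm; rewrite {1}em mdegD mdeg1 addn1 ltnS.
  by rewrite em mpolyXD hM DformM DformX (IH _ hk).
have hZ : forall c (p : P), D (c *: p) = c *: D p.
  by move=> c p; rewrite -mul_mpolyC hM hC mul0r addr0 mul_mpolyC.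
elim/mpolyind => [|c m p _ _ IH]; first by rewrite D0 Dform0.
by rewrite hD DformD hZ DformZ hX IH.
Qed.
End Der.
Lemma seq_max (T : eqType) (s : seq T) (f : T -> real) : s != [::] ->
  exists2 x, x \in s & forall y, y \in s -> Rle (f y) (f x).
Proof.
elim: s => // a s IH _; case: (eqVneq s [::]) => [->|/IH [x xs hx]].
  by exists a; rewrite ?mem_seq1 // => y; rewrite mem_seq1 => /eqP ->; apply: Rle_refl.
case: (Rle_lt_dec (f a) (f x)) => h.
  exists x; first by rewrite inE xs orbT.
  by move=> y; rewrite inE => /orP [/eqP ->|/hx].
exists a; first by rewrite inE eqxx.
move=> y; rewrite inE => /orP [/eqP ->|/hx]; [apply: Rle_refl| lra].
Qed.

Section Top.
Variables (K : fieldType) (n : nat) (w : 'I_n -> real).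
Local Notation P := {mpoly K[n]}.
Local Notation wd := (wdeg w).
Local Notation hom := (@hom K n w).
Local Notation dle := (@dle K n w).
Local Notation dlt := (@dlt K n w).
Local Notation comp := (@comp K n w).

Lemma dlt_eq c d p : c = d -> dlt c p -> dlt d p.
Proof. by move=> ->. Qed.

Lemma top_exists (g : 'I_n -> P) i0 : g i0 != 0 ->
  exists t, (forall i, dle (Rplus (w i) t) (g i)) /\
            exists i, comp (Rplus (w i) t) (g i) != 0.
Proof.
move=> hg.
pose s := [seq (i, m) | i <- enum 'I_n, m <- msupp (g i)].
have hs : s != [::].
  have [m hm] : exists m, m \in msupp (g i0).
    by case: (msupp (g i0)) (msupp_eq0 (g i0)) => [|m r] /=; [rewrite (negbTE hg) | exists m; rewrite inE eqxx].
  apply/eqP => e; have : (i0, m) \in s by apply/allpairsPdep; exists i0, m; rewrite mem_enum.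
  by rewrite e.
have [[i m] /allpairsPdep [i' [m' [_ hm' [-> ->]]]] hmax] :=
  @seq_max _ s (fun x : 'I_n * 'X_{1..n} => Rminus (wd x.2) (w x.1)) hs.
exists (Rminus (wd m') (w i')); split.
  move=> j u hu; have := hmax (j, u); rewrite /=.
  have -> : (j, u) \in s by apply/allpairsPdep; exists j, u; rewrite mem_enum mcoeff_msupp.
  move=> /(_ isT); lra.
exists i'; apply/eqP => /(congr1 (mcoeff m')); rewrite mcoeff_comp mcoeff0.
rewrite asbT; last by lra.
by apply/eqP; rewrite -mcoeff_msupp.
Qed.

Variables (g : 'I_n -> P) (t : real).
Hypothesis Hg : forall i, dle (Rplus (w i) t) (g i).
Local Notation G := (fun i => comp (Rplus (w i) t) (g i)).
Local Notation Dt := (Dform G).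
Local Notation D := (Dform g).

Lemma Dt_hom c f : hom c f -> hom (Rplus c t) (Dt f).
Proof.
move=> hf; apply: hom_sum => i; apply: (@hom_eq _ _ _ (Rplus (Rminus c (w i)) (Rplus (w i) t))); first by lra.
by apply: homM; [apply: hom_deriv | apply: comp_hom].
Qed.

Lemma DDt_dlt c f : hom c f -> dlt (Rplus c t) (D f - Dt f).
Proof.
move=> hf; rewrite Dform_sub; apply: dlt_sum => i.
apply: (@dlt_eq (Rplus (Rminus c (w i)) (Rplus (w i) t))); first by lra.
by apply: dltM; [apply: hom_dle; apply: hom_deriv | apply: dle_split].
Qed.

Lemma D_dlt c h : dlt c h -> dlt (Rplus c t) (D h).
Proof.
move=> hh; apply: dlt_sum => i.
apply: (@dlt_eq (Rplus (Rminus c (w i)) (Rplus (w i) t))); first by lra.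
by apply: dltM'; [apply: dlt_deriv | apply: Hg].
Qed.

Lemma iter_approx c f : hom c f -> forall k,
  hom (Rplus c (Rmult (INR k) t)) (iter k Dt f) /\
  dlt (Rplus c (Rmult (INR k) t)) (iter k D f - iter k Dt f).
Proof.
move=> hf; elim => [|k [h1 h2]].
  split; rewrite /=; first by apply: (hom_eq _ hf); lra.
  by rewrite subrr; apply: dlt0.
have e : Rplus c (Rmult (INR k.+1) t) = Rplus (Rplus c (Rmult (INR k) t)) t.
  by rewrite S_INR; lra.
rewrite e; split; first by apply: Dt_hom.
rewrite /= -{1}(subrK (iter k Dt f) (iter k D f)) DformD addrAC.
have -> : forall a b e : P, a - b + e = e - b + a.
  by move=> a b e0; rewrite addrC addrCA addrC.
by apply: dltD; [apply: DDt_dlt | apply: D_dlt].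
Qed.

Lemma Dt_lnd_hom c f k : hom c f -> iter k D f = 0 -> iter k Dt f = 0.
Proof.
move=> hf hk; have [h1 h2] := iter_approx hf k.
apply: (hom_dlt0 h1); move: h2; rewrite hk sub0r => /dltN; rewrite opprK //.
Qed.

Hypothesis Dlnd : forall f, exists k, iter k D f = 0.

Lemma Dt_lnd f : exists k, iter k Dt f = 0.
Proof.
elim/mpolyind: f => [|c m p _ _ [k2 hk2]]; first by exists 0%N.
have [k1 hk1] := Dlnd 'X_[m].
have hk1' := Dt_lnd_hom (@homX K n w m) hk1.
exists (k1 + k2)%N; rewrite Dform_iterD Dform_iterZ.
have -> : iter (k1 + k2) Dt 'X_[m] = 0 by rewrite addnC iterD hk1' Dform_iter0.
by rewrite iterD hk2 Dform_iter0 scaler0 addr0.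
Qed.

Lemma Dt_ker c R : hom c R -> D R = 0 -> Dt R = 0.
Proof.
move=> hR hDR; have h := DDt_dlt hR; rewrite hDR sub0r in h.
by apply: (hom_dlt0 (Dt_hom hR)); move/dltN: h; rewrite opprK.
Qed.
End Top.
Section Main.
Variables (K : fieldType) (n : nat).
Local Notation P := {mpoly K[n]}.

Lemma msize_bound (R : P) : (1 < msize R)%N -> forall k (h : P), R ^+ k * h != 0 ->
  (k < msize (R ^+ k * h))%N.
Proof.
move=> hR; elim => [|k IH] h.
  by rewrite expr0 mul1r lt0n msize_poly_eq0.
rewrite exprS -mulrA => hnz.
have nR : R != 0 by apply: contraNneq hnz => ->; rewrite mul0r.
have nX : R ^+ k * h != 0 by apply: contraNneq hnz => ->; rewrite mulr0.
rewrite msizeM // -subn1; have := IH _ nX; move: hR; move: (msize R) (msize (R ^+ k * h)) => a b; lia.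
Qed.

Lemma inI (R : P) x : ~ is_unit R ->
  (x \in pideal R) = asb (exists q, x = R * q).
Proof.
move=> hu; rewrite unfold_in /= /pideal_pred asbF //.
by move=> [q hq]; apply: hu; exists q.
Qed.

Lemma qE (R : P) (a b : P) : (qproj R a == qproj R b) = (a - b \in pideal R).
Proof. by rewrite /qproj -Quotient.idealrBE. Qed.
Lemma qD (R : P) (a b : P) : qproj R (a + b) = qproj R a + qproj R b.
Proof. by rewrite /qproj rmorphD. Qed.
Lemma qM (R : P) (a b : P) : qproj R (a * b) = qproj R a * qproj R b.
Proof. by rewrite /qproj rmorphM. Qed.
Lemma q0 (R : P) : qproj R 0 = 0.
Proof. by rewrite /qproj rmorph0. Qed.
Lemma qrepr (R : P) (a : quot_by R) : qproj R (repr a) = a.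
Proof. by rewrite /qproj reprK. Qed.
End Main.
Unset Implicit Arguments.
Set Strict Implicit.

Theorem lemma8 (K : closedFieldType) (hK0 : [pchar K] =i pred0)
  (n : nat) (w : 'I_n -> real) (hw : positive_weights w)
  (R : {mpoly K[n]})
  (hRnc : ~ exists c : K, R = c%:MP)
  (hRirr : irreducible_elt R)
  (hRhom : exists d : real, whomog w d R)
  (hD : exists D : {mpoly K[n]} -> {mpoly K[n]},
      [/\ is_derivation (fun c : K => c%:MP) D, locally_nilpotent D,
          D <> (fun _ => 0) & D R = 0]) :
  exists delta : quot_by R -> quot_by R,
    [/\ is_derivation (fun c : K => qproj R c%:MP) delta,
        locally_nilpotent delta,
        delta <> (fun _ => 0)
      & whomog_qder w delta].
Proof.
move: hD => [D [hDder hDlnd hDne hDR]].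
pose g := fun i => D 'X_i.
have rep : forall f, D f = Dform g f := der_rep hDder.
have Dlnd : forall f, exists k, iter k (Dform g) f = 0.
  move=> f; have [k hk] := hDlnd f; exists k; rewrite -hk.
  by elim: k {hk} => //= k ->; rewrite rep.
have [i0 hi0] : exists i0, g i0 != 0.
  apply: NNPP => hall; apply: hDne; apply: functional_extensionality => f.
  rewrite rep /Dform big1 // => i _.
  have /eqP -> : g i == 0 by apply: NNPP => h; apply: hall; exists i; apply/negP.
  by rewrite mulr0.
case: hRhom => dR /homE hR.
case: hRirr => nR0 nRu _.
have hmR : (1 < msize R)%N.
  case: (leqP (msize R) 1) => // /msize1_polyC e; exfalso; apply: hRnc; exists R@_0; exact: e.
have [t [Hg [i1 hi1]]] := top_exists w hi0.
pose G := fun i => comp w (Rplus (w i) t) (g i).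
have DtR : Dform G R = 0.
  by apply: (Dt_ker Hg hR); rewrite -rep.
have Dtlnd := Dt_lnd Hg Dlnd.
pose Pk := fun k => asb (forall i, exists h, G i = R ^+ k * h).
have ex : exists k, Pk k by exists 0%N; apply/asbP => i; exists (G i); rewrite expr0 mul1r.
have bound : forall k, Pk k -> (k <= msize (G i1))%N.
  move=> k /asbP /(_ i1) [h hh]; apply: ltnW; rewrite hh; apply: msize_bound => //.
  by rewrite -hh.
case: (ex_maxnP ex bound) => k /asbP hk hmax.
have [H hH] : exists H : 'I_n -> {mpoly K[n]}, forall i, G i = R ^+ k * H i.
  exact: (@fin_all_exists _ (fun _ => {mpoly K[n]}) (fun i h => G i = R ^+ k * h) hk).
have [i2 hi2] : exists i2, ~ exists q, H i2 = R * q.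
  apply: NNPP => hall.
  have : Pk k.+1.
    apply/asbP => i; have : exists q, H i = R * q by apply: NNPP => h; apply: hall; exists i.
    by case=> q hq; exists q; rewrite hH hq exprSr mulrA.
  by move/hmax; rewrite ltnn.
have DtE : forall f, Dform G f = R ^+ k * (Dform H) f.
  move=> f; rewrite -Dform_scal; apply: eq_bigr => i _; by rewrite hH.
have nRk : R ^+ k != 0 by apply: expf_neq0.
have ER : (Dform H) R = 0.
  by apply/eqP; move: DtR; rewrite DtE => /eqP; rewrite mulf_eq0 (negbTE nRk).
have ERj : forall j, (Dform H) (R ^+ j) = 0.
  elim => [|j IH]; first by rewrite expr0 -mpolyC1 DformC.
  by rewrite exprS DformM IH ER mulr0 mul0r addr0.
have ERq : forall q, (Dform H) (R * q) = R * (Dform H) q.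
  by move=> q; rewrite DformM ER mul0r addr0.
have Eiter : forall m f, iter m (Dform G) f = R ^+ (k * m) * iter m (Dform H) f.
  move=> m f; elim: m => [|m IH]; first by rewrite muln0 expr0 mul1r.
  rewrite /= IH DtE DformM ERj mul0r addr0 mulrA -exprD.
  by rewrite mulnS.
have Elnd : forall f, exists m, iter m (Dform H) f = 0.
  move=> f; have [m hm] := Dtlnd f; exists m; move: hm; rewrite Eiter.
  by move/eqP; rewrite mulf_eq0 expf_eq0 (negbTE nR0) andbF /= => /eqP.
have homRk : forall j, hom w (Rmult (INR j) dR) (R ^+ j).
  elim => [|j IH].
    rewrite expr0 -mpolyX0; apply: (hom_eq _ (@homX K n w 0%MM)); rewrite wdeg0 /=; lra.
  rewrite exprSr; apply: (hom_eq _ (homM IH hR)); rewrite S_INR; lra.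
have Ehom : forall c f, hom w c f ->
    hom w (Rplus c (Rminus t (Rmult (INR k) dR))) ((Dform H) f).
  move=> c f hf; have := Dt_hom (w:=w) (g:=g) (t:=t) hf; rewrite DtE => hh.
  apply: (hom_eq _ (hom_cancel (homRk k) nRk hh)); lra.
have nu : ~ is_unit R by [].
pose delta := fun a : quot_by R => qproj R ((Dform H) (repr a)).
have dpi : forall p, delta (qproj R p) = qproj R ((Dform H) p).
  move=> p; rewrite /delta; apply/eqP; rewrite qE.
  have : qproj R (repr (qproj R p)) == qproj R p by rewrite qrepr.
  rewrite qE !inI // => /asbP [q hq]; apply/asbP; exists ((Dform H) q).
  by rewrite -DformB hq ERq.
exists delta; split.
- split.
  + move=> a b; rewrite -(qrepr a) -(qrepr b) -qD !dpi DformD qD //.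
  + move=> a b; rewrite -(qrepr a) -(qrepr b) -qM !dpi DformM qD !qM //.
  + by move=> c; rewrite dpi DformC q0.
- move=> a; rewrite -(qrepr a); have [m hm] := Elnd (repr a); exists m.
  have -> : forall m p, iter m delta (qproj R p) = qproj R (iter m (Dform H) p).
    by move=> m' p; elim: m' => //= m' ->; rewrite dpi.
  by rewrite hm q0.
- move=> hd; have := dpi 'X_i2; rewrite hd DformX => /esym /eqP.
  rewrite -(q0 R) qE subr0 inI // => /asbP; exact: hi2.
- exists (Rminus t (Rmult (INR k) dR)) => d a [p [hp <-]].
  exists ((Dform H) p); split; last by rewrite dpi.
  by apply/homE; apply: Ehom; apply/homE.
Qed.
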